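(* Let $\mathcal{C}\subseteq\mathbb{F}_q^n$ be an MDS code with $|\mathcal{C}|=q^k$, $k\ge1$, and minimum distance $d=n-k+1$, and let $u,v\in\mathcal{C}$ with $u\ne v$. Then there exists $u'\in\mathcal{C}$ such that $d(u,u')=d$ and $d(u',v)\le d(u,v)-1$.
   Context: $d(\cdot,\cdot)$ is Hamming distance. An $(n,M,d)_q$ code is MDS if $M=q^{n-d+1}$ (it meets the Singleton bound). *)

(* Defs.v *)
From mathcomp Require Import all_boot all_algebra.
Set Implicit Arguments. Unset Strict Implicit. Unset Printing Implicit Defensive.

Definition hamming (F : finType) (n : nat) (u v : {ffun 'I_n -> F}) : nat :=
  #|[set i : 'I_n | u i != v i]|.

Definition min_dist (F : finType) (n : nat) (C : {set {ffun 'I_n -> F}}) (d : nat) : Prop :=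
  (forall u v, u \in C -> v \in C -> u != v -> d <= hamming u v) /\
  (exists u v, [/\ u \in C, v \in C, u != v & hamming u v = d]).

(* Main.v *)
Require Import Defs.
From mathcomp Require Import all_boot all_algebra.
From mathcomp Require Import zify.
Set Implicit Arguments. Unset Strict Implicit. Unset Printing Implicit Defensive.

Lemma set_ext (T : finType) (A B : {set T}) m :
  A \subset B -> #|A| <= m -> m <= #|B| ->
  exists S : {set T}, [/\ A \subset S, S \subset B & #|S| = m].
Proof.
move=> AB; elim: m => [|m IH] hA hB.
  exists A; split => //; lia.
have [eA|nA] := eqVneq #|A| m.+1; first by exists A.
have [S [AS SB cS]] := IH (ltac:(lia)) (ltac:(lia)).
have : ~~ (B \subset S).
  apply/negP => BS; have := subset_leq_card BS; lia.
case/subsetPn => x xB xS.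
exists (x |: S); split.
- by apply: subset_trans AS (subsetUr _ _).
- by rewrite subUset sub1set xB.
- by rewrite cardsU1 xS cS.
Qed.

Lemma ham_sub (F : finType) n (u w : {ffun 'I_n -> F}) (X : {set 'I_n}) :
  (forall i, i \notin X -> u i = w i) -> hamming u w <= #|X|.
Proof.
move=> h; apply: subset_leq_card; apply/subsetP => i; rewrite inE.
by apply: contraR => /h ->; rewrite eqxx.
Qed.

Theorem lemma6 (F : finFieldType) (n k : nat) (C : {set {ffun 'I_n -> F}})
  (hk : 1 <= k) (hcard : #|C| = #|F| ^ k) (hd : min_dist C (n - k + 1))
  (u v : {ffun 'I_n -> F}) (hu : u \in C) (hv : v \in C) (huv : u != v) :
  exists2 u', u' \in C &
    hamming u u' = n - k + 1 /\ hamming u' v <= hamming u v - 1.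
Proof.
case: hd => hd _.
have q1 : 1 < #|F| by apply: card_finNzRing_gt1.
have kn : k <= n.
  have : #|C| <= #|{ffun 'I_n -> F}| by apply: max_card.
  by rewrite hcard card_ffun card_ord leq_exp2l.
have info : forall T : {set 'I_n}, #|T| = k -> forall t : {ffun 'I_n -> F},
    exists2 c, c \in C & forall i, i \in T -> c i = t i.
  move=> T cT t.
  pose r (w : {ffun 'I_n -> F}) : {ffun 'I_n -> F} :=
    [ffun i => if i \in T then w i else 0%R].
  pose P := [set w : {ffun 'I_n -> F} | w \in pffun_on 0%R T predT].
  have rP : forall w, r w \in P.
    move=> w; rewrite inE; apply/pffun_onP; split => //.
    apply/subsetP => i; rewrite inE ffunE; case: (i \in T) => //.
    by rewrite eqxx.
  have inj : {in C &, injective r}.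
    move=> w w' wC w'C rw; apply/eqP; apply/negPn/negP => ne.
    have := hd _ _ wC w'C ne.
    have : hamming w w' <= #|~: T|.
      apply: ham_sub => i; rewrite inE negbK => iT.
      by have := congr1 (fun f : {ffun 'I_n -> F} => f i) rw; rewrite /= !ffunE iT.
    have := cardsC T; rewrite card_ord; lia.
  have eqRP : [set r w | w in C] = P.
    apply/eqP; rewrite eqEcard; apply/andP; split.
      by apply/subsetP => x /imsetP [w _ ->]; apply: rP.
    rewrite card_in_imset // hcard cardsE card_pffun_on cT.
    by rewrite (_ : #|predT| = #|F|) //; apply: eq_card.
  have := rP t; rewrite -eqRP => /imsetP [c cC ec].
  exists c => // i iT.
  by have := congr1 (fun f : {ffun 'I_n -> F} => f i) ec; rewrite /= !ffunE iT.
pose D := [set i | u i != v i].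
have hD : n - k + 1 <= #|D| := hd _ _ hu hv huv.
have : 0 < #|D| by lia.
case/card_gt0P => j jD.
have jD' : u j != v j by move: jD; rewrite inE.
have cA : #|j |: ~: D| <= k.
  rewrite cardsU1 inE jD /=; have e := cardsC D; rewrite card_ord in e; move: e hD kn; set a := #|D|; set b := #|~: D|; lia.
have [T [AT _ cT]] := set_ext (subsetT (j |: ~: D)) cA
  (ltac:(rewrite cardsT card_ord; exact kn)).
pose t : {ffun 'I_n -> F} := [ffun i => if i == j then v i else u i].
have [c cC hc] := info T cT t.
have cj : c j = v j.
  by rewrite hc ?ffunE ?eqxx //; apply: (subsetP AT); rewrite !inE eqxx.
have cD : forall i, i \notin D -> c i = v i.
  move=> i iD; have iT : i \in T by apply: (subsetP AT); rewrite in_setU1 in_setC iD orbT.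
  rewrite hc // ffunE; case: eqP => // _.
  by move: iD; rewrite inE negbK => /eqP.
exists c => //; split.
  apply/eqP; rewrite eqn_leq; apply/andP; split; last first.
    apply: hd => //; apply/eqP => e; move: jD'; by rewrite e cj eqxx.
  have : hamming u c <= #|j |: ~: T|.
    apply: ham_sub => i; rewrite !inE negb_or negbK => /andP [ij iT].
    by rewrite hc // ffunE (negbTE ij).
  rewrite cardsU1; have := cardsC T; rewrite card_ord cT; case: (j \notin ~: T) => /=; lia.
have : hamming c v <= #|D :\ j|.
  apply: ham_sub => i; rewrite !inE negb_and negbK.
  case/orP => [/eqP -> // | ]; by move=> h; apply: cD; rewrite inE.
rewrite /hamming -/D; have := cardsD1 j D; rewrite jD /=; lia.
Qed.
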